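(* Let $G$ be a group acting on the left by isometries on a geodesic semimetric space $X$ which has a basepoint. Suppose that the action is cocompact and that it is outward proper or inward proper. Then $G$ is finitely generated, and $G$, equipped with the word metric with respect to a finite generating set, is quasi-isometric to $X$. In particular, $X$ is a quasi-metric space.
   Context: Let $\mathbb{R}^\infty=\mathbb{R}^{\ge 0}\cup\{\infty\}$ with the usual order extended so that $\infty$ is largest, and $\infty+x=x+\infty=\infty$, $y\infty=\infty y=\infty$ for $y>0$. A semimetric space is a set $X$ with $d:X\times X\to\mathbb{R}^\infty$ such that $d(x,y)=0$ iff $x=y$, and $d(x,z)\le d(x,y)+d(y,z)$ (no symmetry required). A basepoint is $x_0\in X$ with $d(x_0,y)\neq\infty$ for all $y$; $X$ is strongly connected if every point is a basepoint. A path of length $n\ge 0$ from $x$ to $y$ is a map $p:[0,n]\to X$ with $p(0)=x$, $p(n)=y$, $d(p(a),p(b))\le b-a$ for $0\le a\le b\le n$; a geodesic from $x$ to $y$ (when $d(x,y)<\infty$) is a path of length $d(x,y)$; $X$ is geodesic if a geodesic exists between every $x,y$ with $d(x,y)<\infty$. An action by isometries means each $g\in G$ acts by a distance-preserving bijection. For $A,B\subseteq X$, $d(A,B)=\inf_{a\in A,b\in B}d(a,b)$. Out-ball: $\overrightarrow{\mathcal{B}}_r(x_0)=\{y: d(x_0,y)\le r\}$; in-ball: $\overleftarrow{\mathcal{B}}_r(x_0)=\{y: d(y,x_0)\le r\}$; strong ball $\mathcal{B}_r(x_0)=\overrightarrow{\mathcal{B}}_r(x_0)\cap\overleftarrow{\mathcal{B}}_r(x_0)$.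 The action is cocompact if some strong ball $B$ of finite radius has $\{gB:g\in G\}$ covering $X$. It is outward proper if for every out-ball $B$ of finite radius the set $\{g\in G: B\cap gB\neq\varnothing\}$ is finite; inward proper is the same with in-balls. A subset $T\subseteq X$ is $\mu$-quasi-dense if for every $x\in X$ there is $y\in T$ with $\max(d(x,y),d(y,x))\le\mu$. A map $f:X\to X'$ of semimetric spaces is a $(\lambda,\epsilon)$-quasi-isometric embedding ($1\le\lambda<\infty$, $0<\epsilon<\infty$) if $\frac1\lambda d(x,y)-\epsilon\le d'(f(x),f(y))\le\lambda d(x,y)+\epsilon$ for all $x,y$; it is a quasi-isometry if moreover $f(X)$ is $\mu$-quasi-dense for some finite $\mu\ge 0$; spaces are quasi-isometric if such a map exists. A semimetric space is quasi-metric if it is strongly connected and there are $1\le\lambda<\infty$, $0\le\epsilon<\infty$ with $d(y,x)\le\lambda d(x,y)+\epsilon$ for all $x,y$. For a group $G$ and a finite subset $S$ generating $G$ as a monoid, the word metric is $d_S(g,h)=\min\{n: h=gs_1\cdots s_n,\ s_i\in S\}$. *)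

(* Defs.v *)
From Stdlib Require Import Reals List.
Open Scope R_scope.

(** Extended nonnegative reals R^infty = R^{>=0} \cup {infty}. *)
Inductive ext : Type := Fin (r : R) | Inf.

Definition ext_le (a b : ext) : Prop :=
  match a, b with
  | Fin x, Fin y => x <= y
  | _, Inf => True
  | Inf, Fin _ => False
  end.

Definition ext_add (a b : ext) : ext :=
  match a, b with
  | Fin x, Fin y => Fin (x + y)
  | _, _ => Inf
  end.

Definition ext_scale (c : R) (a : ext) : ext :=
  match a with
  | Fin x => Fin (c * x)
  | Inf => Inf
  end.

(** Semimetric spaces (no symmetry). *)
Definition semimetric {X : Type} (d : X -> X -> ext) : Prop :=
  (forall x y r, d x y = Fin r -> 0 <= r) /\
  (forall x y, d x y = Fin 0 <-> x = y) /\
  (forall x y z, ext_le (d x z) (ext_add (d x y) (d y z))).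

Definition is_basepoint {X : Type} (d : X -> X -> ext) (x0 : X) : Prop :=
  forall y, d x0 y <> Inf.

Definition has_basepoint {X : Type} (d : X -> X -> ext) : Prop :=
  exists x0, is_basepoint d x0.

Definition strongly_connected {X : Type} (d : X -> X -> ext) : Prop :=
  forall x, is_basepoint d x.

(** A path of length n from x to y: p : [0,n] -> X (values outside [0,n] irrelevant). *)
Definition is_path {X : Type} (d : X -> X -> ext) (n : R) (p : R -> X) (x y : X) : Prop :=
  0 <= n /\ p 0 = x /\ p n = y /\
  (forall a b, 0 <= a -> a <= b -> b <= n -> ext_le (d (p a) (p b)) (Fin (b - a))).

Definition geodesic_space {X : Type} (d : X -> X -> ext) : Prop :=
  forall x y r, d x y = Fin r -> exists p : R -> X, is_path d r p x y.

Definition is_group {G : Type} (mul : G -> G -> G) (one : G) (inv : G -> G) : Prop :=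
  (forall a b c, mul a (mul b c) = mul (mul a b) c) /\
  (forall a, mul one a = a) /\ (forall a, mul a one = a) /\
  (forall a, mul (inv a) a = one) /\ (forall a, mul a (inv a) = one).

Definition is_left_action {G X : Type} (mul : G -> G -> G) (one : G)
  (act : G -> X -> X) : Prop :=
  (forall x, act one x = x) /\ (forall g h x, act (mul g h) x = act g (act h x)).

(* each g acts by a distance-preserving map (bijectivity follows from the action axioms) *)
Definition acts_by_isometries {G X : Type} (d : X -> X -> ext) (act : G -> X -> X) : Prop :=
  forall g x y, d (act g x) (act g y) = d x y.

Definition out_ball {X : Type} (d : X -> X -> ext) (x0 : X) (r : R) (y : X) : Prop :=
  ext_le (d x0 y) (Fin r).
Definition in_ball {X : Type} (d : X -> X -> ext) (x0 : X) (r : R) (y : X) : Prop :=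
  ext_le (d y x0) (Fin r).
Definition strong_ball {X : Type} (d : X -> X -> ext) (x0 : X) (r : R) (y : X) : Prop :=
  out_ball d x0 r y /\ in_ball d x0 r y.

Definition translate {G X : Type} (act : G -> X -> X) (g : G) (B : X -> Prop) (y : X) : Prop :=
  exists z, B z /\ y = act g z.

Definition finite_set {G : Type} (P : G -> Prop) : Prop :=
  exists l : list G, forall g, P g -> In g l.

Definition cocompact {G X : Type} (d : X -> X -> ext) (act : G -> X -> X) : Prop :=
  exists (x0 : X) (r : R), forall x, exists g, translate act g (strong_ball d x0 r) x.

Definition outward_proper {G X : Type} (d : X -> X -> ext) (act : G -> X -> X) : Prop :=
  forall (x0 : X) (r : R),
    finite_set (fun g => exists y, out_ball d x0 r y /\ translate act g (out_ball d x0 r) y).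

Definition inward_proper {G X : Type} (d : X -> X -> ext) (act : G -> X -> X) : Prop :=
  forall (x0 : X) (r : R),
    finite_set (fun g => exists y, in_ball d x0 r y /\ translate act g (in_ball d x0 r) y).

Definition prod_list {G : Type} (mul : G -> G -> G) (one : G) (l : list G) : G :=
  fold_right mul one l.

Definition finitely_generated {G : Type} (mul : G -> G -> G) (one : G) (inv : G -> G) : Prop :=
  exists S : list G, forall g, exists l : list G,
    Forall (fun s => In s S \/ In (inv s) S) l /\ g = prod_list mul one l.

Definition monoid_generates {G : Type} (mul : G -> G -> G) (one : G) (S : list G) : Prop :=
  forall g, exists l : list G, Forall (fun s => In s S) l /\ g = prod_list mul one l.

Definition word_reach {G : Type} (mul : G -> G -> G) (one : G) (S : list G)
  (g h : G) (n : nat) : Prop :=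
  exists l : list G, length l = n /\ Forall (fun s => In s S) l /\
    h = mul g (prod_list mul one l).

Definition is_word_metric {G : Type} (mul : G -> G -> G) (one : G) (S : list G)
  (dS : G -> G -> ext) : Prop :=
  forall g h, exists n : nat,
    dS g h = Fin (INR n) /\ word_reach mul one S g h n /\
    (forall m, word_reach mul one S g h m -> (n <= m)%nat).

Definition qi_embedding {X Y : Type} (d : X -> X -> ext) (d' : Y -> Y -> ext)
  (f : X -> Y) (lam eps : R) : Prop :=
  1 <= lam /\ 0 < eps /\
  forall x y,
    ext_le (ext_scale (/ lam) (d x y)) (ext_add (d' (f x) (f y)) (Fin eps)) /\
    ext_le (d' (f x) (f y)) (ext_add (ext_scale lam (d x y)) (Fin eps)).

Definition quasi_dense {Y : Type} (d' : Y -> Y -> ext) (T : Y -> Prop) (mu : R) : Prop :=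
  forall y, exists t, T t /\ ext_le (d' y t) (Fin mu) /\ ext_le (d' t y) (Fin mu).

Definition quasi_isometry {X Y : Type} (d : X -> X -> ext) (d' : Y -> Y -> ext)
  (f : X -> Y) : Prop :=
  exists lam eps mu, qi_embedding d d' f lam eps /\ 0 <= mu /\
    quasi_dense d' (fun y => exists x, y = f x) mu.

Definition quasi_isometric {X Y : Type} (d : X -> X -> ext) (d' : Y -> Y -> ext) : Prop :=
  exists f : X -> Y, quasi_isometry d d' f.

Definition quasi_metric {X : Type} (d : X -> X -> ext) : Prop :=
  strongly_connected d /\
  exists lam eps, 1 <= lam /\ 0 <= eps /\
    forall x y, ext_le (d y x) (ext_add (ext_scale lam (d x y)) (Fin eps)).

(* Main.v *)
Require Import Defs.
From Stdlib Require Import Reals List.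
From Stdlib Require Import ZArith Lia Lra Psatz.
Import ListNotations.
Open Scope R_scope.

Lemma prod_app {G : Type} (mul : G -> G -> G) (one : G)
  (Hassoc : forall a b c, mul a (mul b c) = mul (mul a b) c)
  (Hone_l : forall a, mul one a = a) (w1 w2 : list G) :
  prod_list mul one (w1 ++ w2) = mul (prod_list mul one w1) (prod_list mul one w2).
Proof.
  induction w1 as [|s w1 IH]; simpl.
  - now rewrite Hone_l.
  - rewrite IH. apply Hassoc.
Qed.

Lemma list_bound {A : Type} (f : A -> R) (l : list A) :
  exists C, 0 <= C /\ forall k, In k l -> f k <= C.
Proof.
  induction l as [|a l [C [HC HCl]]].
  - exists 0. split; [lra|]. intros k [].
  - exists (Rmax C (f a)). split.
    + eapply Rle_trans; [exact HC| apply Rmax_l].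
    + intros k [<-|Hk]; [apply Rmax_r|].
      eapply Rle_trans; [apply HCl; exact Hk| apply Rmax_l].
Qed.

Lemma words_bound {A B : Type} (Q : A -> list B -> Prop) (l : list A) :
  (forall k, exists w, Q k w) ->
  exists M, forall k, In k l -> exists w, Q k w /\ (length w <= M)%nat.
Proof.
  intros HQ. induction l as [|a l [M HM]].
  - exists 0%nat. intros k [].
  - destruct (HQ a) as [w Hw].
    exists (Nat.max M (length w)). intros k [<-|Hk].
    + exists w. split; [exact Hw| lia].
    + destruct (HM k Hk) as [w' [Hw' Hl]]. exists w'. split; [exact Hw'| lia].
Qed.

Theorem theorem3p5
  (G X : Type) (mul : G -> G -> G) (one : G) (inv : G -> G)
  (d : X -> X -> ext) (act : G -> X -> X)
  (HG : is_group mul one inv)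
  (Hd : semimetric d) (Hgeo : geodesic_space d) (Hbase : has_basepoint d)
  (Hact : is_left_action mul one act) (Hisom : acts_by_isometries d act)
  (Hcoc : cocompact d act)
  (Hprop : outward_proper d act \/ inward_proper d act) :
  finitely_generated mul one inv /\
  (forall (S : list G) (dS : G -> G -> ext),
     monoid_generates mul one S -> is_word_metric mul one S dS ->
     quasi_isometric dS d) /\
  quasi_metric d.
Proof.
  destruct HG as [Hassoc [Hone_l [Hone_r [Hinv_l Hinv_r]]]].
  destruct Hact as [Hact1 HactM].
  destruct Hd as [Hpos [Hzero Htri]].
  destruct Hcoc as [x0 [r Hcov]].
  destruct Hbase as [b Hb].
  assert (actinv : forall g u, act g (act (inv g) u) = u).
  { intros g u. rewrite <- HactM, Hinv_r, Hact1. reflexivity. }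
  assert (Hx0fin : forall w, d x0 w <> Inf).
  { intro w. destruct (Hcov b) as [k [z [[Hz1 Hz2] Hbz]]].
    assert (Hzw : d z w <> Inf).
    { rewrite <- (Hisom k), <- Hbz. apply Hb. }
    specialize (Htri x0 z w). unfold out_ball in Hz1.
    destruct (d x0 z) as [a|]; [|contradiction].
    destruct (d z w) as [c|]; [|congruence].
    destruct (d x0 w); simpl in Htri; [discriminate| contradiction]. }
  assert (Hfin : forall u v, d u v <> Inf).
  { intros u v. destruct (Hcov u) as [g [z [[Hz1 Hz2] Huz]]].
    specialize (Htri u (act g x0) v).
    assert (H1 : d u (act g x0) = d z x0) by (rewrite Huz; apply Hisom).
    assert (H2 : d (act g x0) v = d x0 (act (inv g) v)).
    { rewrite <- (Hisom g x0 (act (inv g) v)), actinv. reflexivity. }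
    rewrite H1, H2 in Htri. unfold in_ball in Hz2.
    pose proof (Hx0fin (act (inv g) v)) as H3.
    destruct (d z x0) as [a|]; [|contradiction].
    destruct (d x0 (act (inv g) v)) as [c|]; [|congruence].
    destruct (d u v); simpl in Htri; [discriminate| contradiction]. }
  pose (D := fun u v => match d u v with Fin a => a | Inf => 0 end).
  assert (HdD : forall u v, d u v = Fin (D u v)).
  { intros u v. unfold D. destruct (d u v) eqn:E; [reflexivity|].
    exfalso. exact (Hfin u v E). }
  clearbody D.
  assert (DD0 : forall u, D u u = 0).
  { intro u. assert (H := proj2 (Hzero u u) eq_refl). rewrite HdD in H.
    injection H; auto. }
  assert (Dpos : forall u v, 0 <= D u v) by (intros u v; exact (Hpos u v _ (HdD u v))).
  assert (Dtri : forall u v w, D u w <= D u v + D v w).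
  { intros u v w. specialize (Htri u v w). rewrite !HdD in Htri. exact Htri. }
  assert (Diso : forall g u v, D (act g u) (act g v) = D u v).
  { intros g u v. specialize (Hisom g u v). rewrite !HdD in Hisom.
    injection Hisom; auto. }
  assert (actM : forall g k u, act g (act k u) = act (mul g k) u).
  { intros. symmetry. apply HactM. }
  assert (canc : forall g a, mul g (mul (inv g) a) = a).
  { intros g a. rewrite Hassoc, Hinv_r, Hone_l. reflexivity. }
  assert (Hr : 0 <= r).
  { destruct (Hcov b) as [k [z [[Hz1 Hz2] _]]]. unfold out_ball in Hz1.
    rewrite HdD in Hz1. simpl in Hz1. pose proof (Dpos x0 z). lra. }
  assert (Hch : forall u, exists k, D (act k x0) u <= r /\ D u (act k x0) <= r).
  { intro u. destruct (Hcov u) as [k [z [[Hz1 Hz2] Huz]]].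
    unfold out_ball, in_ball in *. rewrite HdD in Hz1, Hz2. simpl in Hz1, Hz2.
    exists k. subst u. rewrite !Diso. split; assumption. }
  assert (Hchain : forall N (q : nat -> X) g h,
    D (act g x0) (q 0%nat) <= r -> D (q N) (act h x0) <= r ->
    (forall i, (i < N)%nat -> D (q i) (q (S i)) <= 1) ->
    exists l, (length l <= S N)%nat /\
      Forall (fun k => D x0 (act k x0) <= 2 * r + 1) l /\
      h = mul g (prod_list mul one l)).
  { intro N. induction N as [|N IHN]; intros q g h H0 HN Hst.
    - exists [mul (inv g) h]. split; [simpl; lia|]. split.
      + constructor; [|constructor]. rewrite <- (Diso g), actM, canc.
        pose proof (Dtri (act g x0) (q 0%nat) (act h x0)). lra.
      + simpl. rewrite Hone_r, canc. reflexivity.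
    - destruct (Hch (q 1%nat)) as [g1 [H1a H1b]].
      destruct (IHN (fun i => q (S i)) g1 h H1a HN (fun i Hi => Hst (S i) ltac:(lia)))
        as [l' [Hlen [Hall Heq]]].
      exists (mul (inv g) g1 :: l'). split; [simpl; lia|]. split.
      + constructor; [|exact Hall]. rewrite <- (Diso g), actM, canc.
        pose proof (Dtri (act g x0) (q 0%nat) (act g1 x0)).
        pose proof (Dtri (q 0%nat) (q 1%nat) (act g1 x0)).
        pose proof (Hst 0%nat ltac:(lia)). lra.
      + simpl. rewrite Heq. rewrite <- Hassoc, canc. reflexivity. }
  assert (Hgchain : forall x y g h,
    D (act g x0) x <= r -> D y (act h x0) <= r ->
    exists l, INR (length l) <= D x y + 2 /\
      Forall (fun k => D x0 (act k x0) <= 2 * r + 1) l /\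
      h = mul g (prod_list mul one l)).
  { intros x y g h Hx Hy.
    destruct (Hgeo x y (D x y) (HdD x y)) as [p [HL [Hp0 [HpL Hp]]]].
    destruct (archimed (D x y)) as [Hup1 Hup2].
    set (N := Z.to_nat (up (D x y))).
    assert (HN : INR N = IZR (up (D x y))).
    { unfold N. rewrite INR_IZR_INZ, Z2Nat.id; [reflexivity|].
      apply le_IZR. lra. }
    destruct (Hchain N (fun i => p (Rmin (INR i) (D x y))) g h) as [l [Hl1 [Hl2 Hl3]]].
    - simpl. rewrite Rmin_left by lra. rewrite Hp0. exact Hx.
    - simpl. rewrite Rmin_right by lra. rewrite HpL. exact Hy.
    - intros i Hi. cbv beta.
      assert (Hi0 := pos_INR i). rewrite S_INR.
      specialize (Hp (Rmin (INR i) (D x y)) (Rmin (INR i + 1) (D x y))).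
      rewrite HdD in Hp. simpl in Hp.
      unfold Rmin in *. destruct (Rle_dec (INR i) (D x y));
        destruct (Rle_dec (INR i + 1) (D x y)); lra.
    - exists l. split; [|split; assumption].
      apply le_INR in Hl1. rewrite S_INR in Hl1. lra. }
  assert (HF : exists lF, forall k, D x0 (act k x0) <= 2 * r + 1 -> In k lF).
  { destruct Hprop as [Ho|Hi].
    - destruct (Ho x0 (2 * r + 1)) as [lF HlF]. exists lF. intros k Hk. apply HlF.
      exists (act k x0). split.
      + unfold out_ball. rewrite HdD. exact Hk.
      + exists x0. split; [|reflexivity]. unfold out_ball. rewrite HdD, DD0. simpl. lra.
    - destruct (Hi x0 (2 * r + 1)) as [lF HlF]. exists lF. intros k Hk. apply HlF.
      exists x0. split.
      + unfold in_ball. rewrite HdD, DD0. simpl. lra.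
      + exists (act (inv k) x0). split.
        * unfold in_ball. rewrite HdD. simpl. rewrite <- (Diso k), actinv. exact Hk.
        * symmetry. apply actinv. }
  destruct HF as [lF HF].
  assert (Hfwd : forall C (P : G -> Prop) l, (forall k, P k -> D x0 (act k x0) <= C) ->
    Forall P l -> D x0 (act (prod_list mul one l) x0) <= INR (length l) * C).
  { intros C P l HP Hl. induction Hl as [|k l Hk Hl IH].
    - simpl. rewrite Hact1, DD0. lra.
    - change (prod_list mul one (k :: l)) with (mul k (prod_list mul one l)).
      change (length (k :: l)) with (S (length l)).
      rewrite <- actM. pose proof (Dtri x0 (act k x0) (act k (act (prod_list mul one l) x0))).
      rewrite Diso in H. pose proof (HP k Hk). rewrite S_INR. lra. }
  assert (Hbwd : forall C (P : G -> Prop) l, (forall k, P k -> D (act k x0) x0 <= C) ->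
    Forall P l -> D (act (prod_list mul one l) x0) x0 <= INR (length l) * C).
  { intros C P l HP Hl. induction Hl as [|k l Hk Hl IH].
    - simpl. rewrite Hact1, DD0. lra.
    - change (prod_list mul one (k :: l)) with (mul k (prod_list mul one l)).
      change (length (k :: l)) with (S (length l)).
      rewrite <- actM. pose proof (Dtri (act k (act (prod_list mul one l) x0)) (act k x0) x0).
      rewrite Diso in H. pose proof (HP k Hk). rewrite S_INR. lra. }
  split; [|split].
  -
    exists lF. intro g.
    destruct (Hgchain x0 (act g x0) one g) as [l [_ [Hl Heq]]].
    + rewrite Hact1, DD0. lra.
    + rewrite DD0. lra.
    + exists l. split.
      * eapply Forall_impl; [|exact Hl]. intros k Hk. left. apply HF. exact Hk.
      * rewrite Hone_l in Heq. exact Heq.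
  -
    intros S dS HS HdS.
    destruct (list_bound (fun s => D x0 (act s x0)) S) as [CS [HCS HCSl]].
    destruct (words_bound (fun k w => Forall (fun s => In s S) w /\ k = prod_list mul one w) lF)
      as [M HM].
    { intro k. destruct (HS k) as [w Hw]. exists w. exact Hw. }
    assert (Hcat : forall l, Forall (fun k => In k lF) l -> exists w,
      Forall (fun s => In s S) w /\ (length w <= M * length l)%nat /\
      prod_list mul one w = prod_list mul one l).
    { intros l Hl. induction Hl as [|k l Hk Hl IH].
      - exists nil. simpl. split; [constructor| split; [lia| reflexivity]].
      - destruct (HM k Hk) as [w1 [[Hw1 Hk1] Hlen1]].
        destruct IH as [w2 [Hw2 [Hlen2 Hp2]]].
        exists (w1 ++ w2). split; [apply Forall_app; split; assumption|]. split.
        + rewrite length_app. simpl. nia.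
        + rewrite prod_app by assumption. rewrite Hp2, <- Hk1. reflexivity. }
    set (lam := INR M + CS + 1).
    assert (HM0 := pos_INR M).
    exists (fun g => act g x0). exists lam, 2, r.
    split; [split; [unfold lam; lra| split; [lra|]]|].
    + intros g h. destruct (HdS g h) as [n [Hn [Hreach Hmin]]].
      rewrite Hn, !HdD. simpl. split.
      * destruct (Hgchain (act g x0) (act h x0) g h) as [l [Hlen [Hl Heq]]];
          [rewrite DD0; lra| rewrite DD0; lra|].
        destruct (Hcat l) as [w [Hw [Hwlen Hwp]]].
        { eapply Forall_impl; [|exact Hl]. intros k Hk. apply HF. exact Hk. }
        assert (Hnw : (n <= length w)%nat).
        { apply Hmin. exists w. split; [reflexivity| split; [exact Hw|]].
          rewrite Hwp. exact Heq. }
        assert (Hnr : INR n <= INR M * INR (length l)).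
        { rewrite <- mult_INR. apply le_INR. lia. }
        pose proof (Dpos (act g x0) (act h x0)).
        assert (Hnl : INR n <= lam * (D (act g x0) (act h x0) + 2)).
        { unfold lam. pose proof (pos_INR (length l)). nra. }
        apply (Rmult_le_reg_l lam); [unfold lam; lra|].
        rewrite <- Rmult_assoc, Rinv_r, Rmult_1_l by (unfold lam; lra). lra.
      * destruct Hreach as [l [Hlen [Hl Heq]]]. subst h.
        rewrite <- actM, Diso.
        pose proof (Hfwd CS (fun s => In s S) l HCSl Hl). rewrite Hlen in H.
        pose proof (pos_INR n). unfold lam. nra.
    + split; [exact Hr|]. intro y. destruct (Hch y) as [k [Hk1 Hk2]].
      exists (act k x0). split; [exists k; reflexivity|].
      rewrite !HdD. simpl. split; assumption.
  -
    split.
    { intros u v. apply Hfin. }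
    destruct (list_bound (fun k => D (act k x0) x0) lF) as [C [HC HCl]].
    exists (C + 1), (2 * r + 2 * C). split; [lra| split; [lra|]].
    intros x y.
    destruct (Hch x) as [g [Hg1 Hg2]]. destruct (Hch y) as [h [Hh1 Hh2]].
    destruct (Hgchain x y g h Hg1 Hh2) as [l [Hlen [Hl Heq]]].
    assert (HlF : Forall (fun k => In k lF) l).
    { eapply Forall_impl; [|exact Hl]. intros k Hk. apply HF. exact Hk. }
    pose proof (Hbwd C (fun k => In k lF) l HCl HlF) as Hb2.
    assert (Hhg : D (act h x0) (act g x0) <= INR (length l) * C).
    { rewrite Heq, <- actM, Diso. exact Hb2. }
    rewrite !HdD. simpl.
    pose proof (Dtri y (act h x0) x). pose proof (Dtri (act h x0) (act g x0) x).
    pose proof (Dpos x y). pose proof (pos_INR (length l)).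
    nra.
Qed.
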